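(* Let $C$ be a binary linear constant weight code of dimension at least $2$. Then $\mathrm{PAut}(C)$ has a subgroup isomorphic to $S_3$.
   Context: A binary linear constant weight code of weight $w$ is an $\mathbb{F}_2$-subspace of $\mathbb{F}_2^n$ all of whose non-zero vectors have exactly $w$ coordinates equal to $1$. $S_n$ acts on $\mathbb{F}_2^n$ by $\sigma(v_1,\dots,v_n)=(v_{\sigma^{-1}(1)},\dots,v_{\sigma^{-1}(n)})$, and $\mathrm{PAut}(C)=\{\sigma\in S_n:\sigma(C)=C\}$. *)

(* Defs.v *)
From HB Require Import structures.
From mathcomp Require Import all_boot all_order all_algebra all_fingroup.
Set Implicit Arguments. Unset Strict Implicit. Unset Printing Implicit Defensive.
Import GRing.Theory.
Local Open Scope ring_scope.

Definition wt n (v : 'rV['F_2]_n) : nat := #|[set i : 'I_n | v 0 i != 0]|.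

Definition permv n (s : 'S_n) (v : 'rV['F_2]_n) : 'rV['F_2]_n :=
  \row_i v 0 ((s^-1)%g i).

Definition constant_weight n (C : {vspace 'rV['F_2]_n}) (w : nat) : Prop :=
  forall v, v \in C -> v != 0 -> wt v = w.

Definition PAut n (C : {vspace 'rV['F_2]_n}) : {set 'S_n} :=
  [set s : 'S_n | [set permv s v | v in [set x | x \in C]] == [set x | x \in C]].

(* Main.v *)
Require Import Defs.
From mathcomp Require Import all_boot all_order all_algebra all_fingroup all_field.
From mathcomp Require Import zify ring.
Set Implicit Arguments. Unset Strict Implicit. Unset Printing Implicit Defensive.
Import GRing.Theory.
Local Open Scope ring_scope.

Lemma F2cases (x : 'F_2) : x = 0 \/ x = 1.
Proof. have := ltn_ord x. case: x => [[|[|//]]] H _; [left|right]; exact: val_inj. Qed.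

Lemma F2neq0 (x : 'F_2) : (x != 0) = (x == 1).
Proof. by case: (F2cases x) => ->. Qed.

Lemma dcount (I J : finType) (K : {set I}) (P : I -> J -> bool) :
  (\sum_(i in K) #|[set j | P i j]| = \sum_j #|[set i in K | P i j]|)%N.
Proof.
rewrite (eq_bigr (fun i => \sum_j (P i j : nat)))%N; last first.
  by move=> i _; rewrite -sum1_card big_mkcond /=; apply: eq_bigr => j _; rewrite inE; case: (P i j).
rewrite exchange_big /=; apply: eq_bigr => j _.
by rewrite -sum1_card [RHS]big_mkcond /= big_mkcond /=; apply: eq_bigr => i _; rewrite !inE; case: (i \in K); case: (P i j).
Qed.

Section Half.
Variable n : nat.
Implicit Types (S : {set 'rV['F_2]_n}).
Lemma half S (psi : 'rV['F_2]_n -> 'F_2) c0 :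
  (forall x y, x \in S -> y \in S -> x + y \in S) ->
  (forall x y, x \in S -> y \in S -> psi (x + y) = psi x + psi y) ->
  c0 \in S -> psi c0 = 1 ->
  #|S :\: [set x | psi x == 1]| = #|S :&: [set x | psi x == 1]| /\
  #|S| = (2 * #|S :\: [set x | psi x == 1%R]|)%N.
Proof.
move=> Sadd padd c0S pc0.
set B := [set x | psi x == 1%R].
have inj : injective (fun x : 'rV['F_2]_n => x + c0) by apply: addIr.
have h1 : (#|S :\: B| <= #|S :&: B|)%N.
  rewrite -(card_imset _ inj); apply: subset_leq_card; apply/subsetP => y /imsetP [x].
  rewrite !inE => /andP [xB xS] ->; rewrite Sadd // padd // pc0.
  by move: xB; case: (F2cases (psi x)) => -> //; move=> _; apply/eqP.
have h2 : (#|S :&: B| <= #|S :\: B|)%N.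
  rewrite -(card_imset _ inj); apply: subset_leq_card; apply/subsetP => y /imsetP [x].
  rewrite !inE => /andP [xS xB] ->; rewrite Sadd // andbT padd // pc0.
  by move/eqP: xB => ->; apply/eqP.
have e : #|S :\: B| = #|S :&: B| by apply/eqP; rewrite eqn_leq h1 h2.
split => //; by rewrite -(cardsID B S) e mul2n addnn.
Qed.
End Half.

Section Class.
Variables (n w : nat) (C : {vspace 'rV['F_2]_n}).
Hypothesis cw : constant_weight C w.
Local Notation V := 'rV['F_2]_n.

Definition same (phi : V -> 'F_2) (j : 'I_n) : bool :=
  [forall c : V, (c \in C) ==> (c 0 j == phi c)].
Definition zeroc (j : 'I_n) : bool := [forall c : V, (c \in C) ==> (c 0 j == 0)].
Definition addC (phi : V -> 'F_2) :=
  forall x y, x \in C -> y \in C -> phi (x + y) = phi x + phi y.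
Definition nzC (phi : V -> 'F_2) := exists2 c, c \in C & phi c = 1.

Lemma wt0 : wt (0 : V) = 0%N.
Proof. by apply/eqP; rewrite cards_eq0; apply/eqP/setP => i; rewrite !inE mxE eqxx. Qed.

Lemma Csum (K : {set V}) : K \subset [set x | x \in C] -> (0 : V) \in K ->
  (\sum_(c in K) wt c = (#|K| - 1) * w)%N.
Proof.
move=> KC K0; rewrite (bigD1 0) //= wt0 add0n.
rewrite (eq_bigr (fun _ => w)); last first.
  move=> c /andP [cK cn0]; apply: cw => //.
  by move/subsetP: KC => /(_ c cK); rewrite inE.
rewrite sum_nat_const; congr (_ * _)%N.
rewrite (cardD1 0 K) K0 add1n subn1 /=; apply: eq_card => x; rewrite !inE andbC.
by [].
Qed.

Lemma addC0 phi : addC phi -> phi 0 = 0.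
Proof.
move=> pa; have := pa 0 0 (rpred0 _) (rpred0 _); rewrite addr0 => /esym/eqP.
by rewrite -subr_eq0 addrK => /eqP.
Qed.

Lemma gen_wit phi j : addC phi -> ~~ zeroc j -> ~~ same phi j ->
  exists2 c, c \in C & (phi c == 0%R) && (c 0 j == 1).
Proof.
move=> pa /forallPn [a]; rewrite negb_imply F2neq0 => /andP [aC /eqP aj].
move=> /forallPn [b]; rewrite negb_imply => /andP [bC bj].
case: (F2cases (phi a)) => pa0; first by exists a => //; rewrite pa0 aj !eqxx.
case: (F2cases (phi b)) => pb0.
  by exists b => //; rewrite pb0 eqxx -F2neq0; move: bj; rewrite pb0.
have bj0 : b 0 j = 0 by case: (F2cases (b 0 j)) bj => ->; rewrite ?pb0 ?eqxx.
exists (a + b); first exact: rpredD.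
by rewrite pa // pa0 pb0 mxE aj bj0; vm_compute.
Qed.

Lemma count_main phi : addC phi -> nzC phi ->
  (2 * ((#|[set c | (c \in C) && (phi c == 0%R)]| - 1) * w) =
   #|[set c | (c \in C) && (phi c == 0%R)]| * #|[set j | ~~ zeroc j && ~~ same phi j]|)%N.
Proof.
move=> pa [c0 c0C pc0]; set K := [set c | (c \in C) && (phi c == 0%R)].
have KC : K \subset [set x | x \in C] by apply/subsetP => x; rewrite !inE => /andP[].
have K0 : (0:V) \in K by rewrite inE rpred0 addC0 ?eqxx.
rewrite -(Csum KC K0) /wt (dcount K (fun c j => c 0 j != 0)) big_distrr /=.
rewrite mulnC -sum_nat_const [RHS]big_mkcond /=; apply: eq_bigr => j _.
rewrite inE; case: ifP => [/andP [zj sj] | ].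
  have [c1 c1C /andP [pc1 cj1]] := gen_wit pa zj sj.
  have Ka : forall x y, x \in K -> y \in K -> x + y \in K.
    move=> x y; rewrite !inE => /andP [xC /eqP px] /andP [yC /eqP py].
    by rewrite rpredD // pa // px py addr0 eqxx.
  have Kb : forall x y, x \in K -> y \in K -> (x + y) 0 j = x 0 j + y 0 j.
    by move=> x y _ _; rewrite mxE.
  have c1K : c1 \in K by rewrite inE c1C.
  have [E1 E2] := @half n K (fun c => c 0 j) c1 Ka Kb c1K (eqP cj1).
  have -> : [set i : V in K | i 0 j != 0] = K :&: [set x : V | x 0 j == 1%R].
    by apply/setP => x; rewrite !inE F2neq0.
  by rewrite E2 -E1.
move/negbT; rewrite negb_and !negbK => H.
apply/eqP; rewrite muln_eq0; apply/orP; right; rewrite cards_eq0; apply/eqP/setP => x.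
rewrite !inE; apply/negbTE; rewrite negb_and negbK -implybE; apply/implyP.
move=> /andP [xC /eqP px]; case/orP: H => /forallP /(_ x); rewrite xC /= => /eqP ->.
  by [].
by rewrite px.
Qed.

Lemma part phi : nzC phi ->
  (#|[set j | zeroc j]| + #|[set j | same phi j]| +
   #|[set j | ~~ zeroc j && ~~ same phi j]| = n)%N.
Proof.
move=> [c0 c0C pc0].
have dis : [set j | zeroc j] :&: [set j | same phi j] = set0.
  apply/setP => j; rewrite !inE; apply/negbTE/negP => /andP [/forallP /(_ c0) z /forallP /(_ c0) s].
  by move: z s; rewrite c0C /= => /eqP -> /eqP; rewrite pc0.
have := cardsUI [set j | zeroc j] [set j | same phi j]; rewrite dis cards0 addn0 => <-.
have -> : [set j | ~~ zeroc j && ~~ same phi j] = ~: ([set j | zeroc j] :|: [set j | same phi j]).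
  by apply/setP => j; rewrite !inE negb_or.
by rewrite cardsC card_ord.
Qed.

Lemma Kcard phi : addC phi -> nzC phi ->
  (2 * #|[set c | (c \in C) && (phi c == 0%R)]| = #|C|)%N.
Proof.
move=> pa [c0 c0C pc0].
have Sa : forall x y, x \in [set c : V | c \in C] -> y \in [set c : V | c \in C] -> x + y \in [set c : V | c \in C].
  by move=> x y; rewrite !inE; apply: rpredD.
have Sb : forall x y, x \in [set c : V | c \in C] -> y \in [set c : V | c \in C] -> phi (x + y) = phi x + phi y.
  by move=> x y; rewrite !inE; apply: pa.
have c0S : c0 \in [set c : V | c \in C] by rewrite inE.
have [_ E] := @half n [set c : V | c \in C] phi c0 Sa Sb c0S pc0.
have <- : [set c : V | c \in C] :\: [set x | phi x == 1%R] = [set c | (c \in C) && (phi c == 0%R)].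
  by apply/setP => x; rewrite !inE -F2neq0 negbK andbC.
rewrite -E; apply: eq_card => x; rewrite inE; by [].
Qed.

Lemma class_eq phi psi : addC phi -> nzC phi -> addC psi -> nzC psi ->
  #|[set j | same phi j]| = #|[set j | same psi j]|.
Proof.
move=> pa pn qa qn.
have := Kcard pa pn; have := Kcard qa qn; move=> <- /eqP; rewrite eqn_pmul2l // => /eqP E.
have := count_main pa pn; have := count_main qa qn; rewrite E.
set k := #|[set c | (c \in C) && (psi c == 0%R)]|.
have k0 : (0 < k)%N.
  by apply/card_gt0P; exists 0; rewrite inE rpred0 addC0 ?eqxx.
move=> -> /eqP; rewrite eqn_pmul2l // => /eqP G.
have := part pn; have := part qn; rewrite G; lia.
Qed.

End Class.

Ltac f2b := repeat match goal with |- context [ @fun_of_matrix _ _ _ ?a ?i ?j ] =>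
  let H := fresh in case: (F2cases (@fun_of_matrix _ _ _ a i j)) => H; rewrite H; clear H end;
  by apply/eqP.

Definition o0 : 'I_3 := @Ordinal 3 0 isT.
Definition o1 : 'I_3 := @Ordinal 3 1 isT.
Definition o2 : 'I_3 := @Ordinal 3 2 isT.
Lemma ord3 (i : 'I_3) : i = o0 \/ i = o1 \/ i = o2.
Proof. case: i => [[|[|[|//]]] H]; [left|right;left|right;right]; exact: val_inj. Qed.

Lemma gM_gen (R : comRingType) n (p q : 'I_n) (c1 c2 : 'rV[R]_n) (E : 'I_3 -> 'rV[R]_n)
  (s t : 'S_3) (c : 'rV[R]_n) :
  c1 0 p = 1 -> c1 0 q = 0 -> c2 0 p = 0 -> c2 0 q = 1 ->
  E o0 = c1 -> E o1 = c2 -> E o2 = c1 + c2 -> E (s o2) = E (s o0) + E (s o1) ->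
  let G (u : 'S_3) (x : 'rV[R]_n) := x + x 0 p *: (E (u o0) - c1) + x 0 q *: (E (u o1) - c2) in
  G s (G t c) = G (t * s)%g c.
Proof.
move=> c1p c1q c2p c2q E0 E1 E2 Es G; rewrite /G !permM.
have d01 : t o0 != t o1 by rewrite (inj_eq perm_inj).
move: d01; case: (ord3 (t o0)) => [|[|]] ->; case: (ord3 (t o1)) => [|[|]] -> //;
  rewrite ?eqxx // => _; rewrite ?E0 ?E1 ?E2 ?Es;
  move: (E (s o0)) (E (s o1)) => A B;
  apply/rowP => i; rewrite !mxE ?c1p ?c1q ?c2p ?c2q; ring.
Qed.

Section Sym.
Variables (n w : nat) (C : {vspace 'rV['F_2]_n}).
Hypothesis cw : constant_weight C w.
Local Notation V := 'rV['F_2]_n.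
Variables (p q : 'I_n) (c1 c2 : V).
Hypotheses (c1C : c1 \in C) (c2C : c2 \in C) (c1p : c1 0 p = 1) (c1q : c1 0 q = 0)
  (c2p : c2 0 p = 0) (c2q : c2 0 q = 1).

Definition e (i : 'I_3) : V :=
  if val i == 0%N then c1 else if val i == 1%N then c2 else c1 + c2.
Lemma e0 : e o0 = c1. Proof. by []. Qed.
Lemma e1 : e o1 = c2. Proof. by []. Qed.
Lemma e2 : e o2 = c1 + c2. Proof. by []. Qed.

Lemma eC i : e i \in C.
Proof. by case: (ord3 i) => [|[|]] ->; rewrite ?e0 ?e1 ?e2 ?rpredD. Qed.

Lemma e_inj : injective e.
Proof.
move=> i j; case: (ord3 i) => [|[|]] ->; case: (ord3 j) => [|[|]] -> //;
  rewrite ?e0 ?e1 ?e2 => /(congr1 (fun v : V => (v 0 p, v 0 q)));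
  rewrite ?mxE ?c1p ?c1q ?c2p ?c2q => /eqP H; by vm_compute in H.
Qed.

Lemma e_sum (s : 'S_3) : e (s o0) + e (s o1) = e (s o2).
Proof.
have d01 : s o0 != s o1 by rewrite (inj_eq perm_inj).
have d02 : s o0 != s o2 by rewrite (inj_eq perm_inj).
have d12 : s o1 != s o2 by rewrite (inj_eq perm_inj).
move: d01 d02 d12.
case: (ord3 (s o0)) => [|[|]] ->; case: (ord3 (s o1)) => [|[|]] ->;
  case: (ord3 (s o2)) => [|[|]] ->; rewrite ?eqxx //= => _ _ _;
  rewrite ?e0 ?e1 ?e2; apply/rowP => i; rewrite !mxE; f2b.
Qed.

Definition g (s : 'S_3) (c : V) : V :=
  c + c 0 p *: (e (s o0) - c1) + c 0 q *: (e (s o1) - c2).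

Lemma g1 c : g 1 c = c.
Proof. by rewrite /g !perm1 e0 e1 !subrr !scaler0 !addr0. Qed.

Lemma gC s c : c \in C -> g s c \in C.
Proof. by move=> cC; rewrite /g !rpredD ?rpredZ ?rpredB ?eC. Qed.

Lemma gD s x y : g s (x + y) = g s x + g s y.
Proof. apply/rowP => i; rewrite !mxE; ring. Qed.

Lemma gM s t c : g s (g t c) = g (t * s)%g c.
Proof. exact: (@gM_gen _ _ p q c1 c2 e s t c c1p c1q c2p c2q e0 e1 e2 (esym (e_sum s))). Qed.

Definition phis (s : 'S_3) (j : 'I_n) : V -> 'F_2 := fun c => (g s c) 0 j.
Definition fj (j : 'I_n) : V -> 'F_2 := fun c => c 0 j.
Definition cls (phi : V -> 'F_2) : {set 'I_n} := [set i | same C phi i].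
Definition tau (s : 'S_3) (j : 'I_n) : 'I_n :=
  nth j (enum (cls (phis s j))) (index j (enum (cls (fj j)))).

Lemma ginv s c : g s (g s^-1 c) = c.
Proof. by rewrite gM mulVg g1. Qed.

Lemma fj_in j : j \in cls (fj j).
Proof. by rewrite inE; apply/forallP => c; apply/implyP. Qed.

Lemma cls_ext phi psi : (forall c, c \in C -> phi c = psi c) -> cls phi = cls psi.
Proof.
move=> H; apply/setP => i; rewrite !inE; apply/forallP/forallP => K c; apply/implyP => cC;
  have := K c; rewrite cC /= => /eqP ->; by rewrite H.
Qed.

Lemma cls_of phi i : i \in cls phi -> cls (fj i) = cls phi.
Proof.
rewrite inE => /forallP H; apply: cls_ext => c cC; have := H c; rewrite cC => /eqP.
by rewrite /fj.
Qed.

Lemma addC_fj j : addC C (fj j).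
Proof. by move=> x y _ _; rewrite /fj mxE. Qed.

Lemma addC_phis s j : addC C (phis s j).
Proof. by move=> x y _ _; rewrite /phis gD mxE. Qed.

Lemma card_cls s j : #|cls (phis s j)| = #|cls (fj j)|.
Proof.
case: (boolP (zeroc C j)) => [/forallP z | nz].
  suff -> : cls (phis s j) = cls (fj j) by [].
  apply: cls_ext => c cC; rewrite /phis /fj.
  have := z c; rewrite cC => /eqP ->; have := z (g s c); rewrite gC // => /eqP -> //.
have [a aC aj] : exists2 a, a \in C & a 0 j = 1.
  move/forallPn: nz => [a]; rewrite negb_imply F2neq0 => /andP [aC /eqP aj].
  by exists a.
apply: (class_eq cw) => //; try apply: addC_phis; try apply: addC_fj.
  by exists (g s^-1 a); rewrite ?gC // /phis ginv.
by exists a.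
Qed.

Lemma idx_lt s j : (index j (enum (cls (fj j))) < size (enum (cls (phis s j))))%N.
Proof. by rewrite -cardE card_cls cardE index_mem mem_enum fj_in. Qed.

Lemma tau_in s j : tau s j \in cls (phis s j).
Proof. by rewrite -mem_enum /tau mem_nth // idx_lt. Qed.

Lemma tau_idx s j :
  index (tau s j) (enum (cls (fj (tau s j)))) = index j (enum (cls (fj j))).
Proof. by rewrite (cls_of (tau_in s j)) /tau index_uniq ?enum_uniq ?idx_lt. Qed.

Lemma tau_spec s j c : c \in C -> c 0 (tau s j) = g s c 0 j.
Proof. by move=> cC; have := tau_in s j; rewrite inE => /forallP /(_ c); rewrite cC => /eqP. Qed.

Lemma tauM s t j : tau (s * t)%g j = tau s (tau t j).
Proof.
set m := tau t j.
have E1 : cls (phis s m) = cls (phis (s * t)%g j).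
  apply: cls_ext => c cC; rewrite /phis tau_spec ?gC //.
  by rewrite gM.
have Im : index m (enum (cls (fj m))) = index j (enum (cls (fj j))) := tau_idx t j.
rewrite {2}/tau Im E1 /tau; apply: set_nth_default.
by rewrite idx_lt.
Qed.

Lemma tau_inj s : injective (tau s).
Proof.
move=> j1 j2 E.
have H : forall c, c \in C -> c 0 j1 = c 0 j2.
  move=> c cC; rewrite -(ginv s c).
  by rewrite -!tau_spec ?gC // E.
have C12 : cls (fj j1) = cls (fj j2) by apply: cls_ext => c cC; rewrite /fj H.
have I12 : index j1 (enum (cls (fj j1))) = index j2 (enum (cls (fj j2))).
  by rewrite -(tau_idx s j1) E (tau_idx s j2).
have j2in : j2 \in enum (cls (fj j1)) by rewrite C12 mem_enum fj_in.
have j1in : j1 \in enum (cls (fj j1)) by rewrite mem_enum fj_in.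
rewrite -C12 in I12.
by rewrite -{1}(nth_index j1 j1in) I12 nth_index.
Qed.

Definition T (s : 'S_3) : 'S_n := perm (@tau_inj s).
Definition Fm (s : 'S_3) : 'S_n := ((T s)^-1)%g.

Lemma TM s t : T (s * t)%g = (T t * T s)%g.
Proof. by apply/permP => j; rewrite permM !permE tauM. Qed.

Lemma FmM : {in [set: 'S_3] &, {morph Fm : x y / (x * y)%g >-> (x * y)%g}}.
Proof. by move=> x y _ _; rewrite /Fm TM invMg. Qed.

Lemma permv_F s c : c \in C -> permv (Fm s) c = g s c.
Proof. by move=> cC; apply/rowP => i; rewrite mxE /Fm invgK permE tau_spec. Qed.

Lemma permv_inj (sg : 'S_n) : injective (permv sg).
Proof.
move=> x y /rowP H; apply/rowP => i; have := H (sg i); rewrite !mxE.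
by rewrite -permM mulgV perm1.
Qed.

Lemma F_PAut s : Fm s \in PAut C.
Proof.
rewrite inE eqEcard card_imset ?leqnn ?andbT; last exact: permv_inj.
apply/subsetP => y /imsetP [x]; rewrite !inE => xC ->; by rewrite permv_F // gC.
Qed.

Lemma gc1 s : g s c1 = e (s o0).
Proof. by rewrite /g c1p c1q scale1r scale0r addr0 addrC subrK. Qed.
Lemma gc2 s : g s c2 = e (s o1).
Proof. by rewrite /g c2p c2q scale0r scale1r addr0 addrC subrK. Qed.

Lemma F_inj s : Fm s = 1%g -> s = 1%g.
Proof.
move=> H.
have P1 : forall c, c \in C -> g s c = c.
  by move=> c cC; rewrite -permv_F // H; apply/rowP => i; rewrite mxE invg1 perm1.
have s0 : s o0 = o0 by apply: e_inj; rewrite -gc1 P1.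
have s1 : s o1 = o1 by apply: e_inj; rewrite -gc2 P1.
have s2 : s o2 = o2.
  case: (ord3 (s o2)) => [|[|]] // h.
    by move: s0; rewrite -h => /perm_inj.
  by move: s1; rewrite -h => /perm_inj.
by apply/permP => i; rewrite perm1; case: (ord3 i) => [|[|]] ->.
Qed.

End Sym.

Lemma oppF2 n (v : 'rV['F_2]_n) : - v = v.
Proof. by apply/rowP => i; rewrite mxE; case: (F2cases (v 0 i)) => ->; apply/eqP. Qed.

Lemma nz_coord n (u : 'rV['F_2]_n) : u != 0 -> exists p, u 0 p = 1.
Proof.
move=> un.
have : [exists p, u 0 p != 0].
  apply: contraR un => /existsPn H; apply/eqP/rowP => i; rewrite mxE.
  by have := H i; rewrite negbK => /eqP.
by case/existsP => p; rewrite F2neq0 => /eqP up; exists p.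
Qed.

Theorem proposition5p7 (n w : nat) (C : {vspace 'rV['F_2]_n}) :
  constant_weight C w -> (2 <= \dim C)%N ->
  exists H : {group 'S_n}, H \subset PAut C /\ (H \isog [set: 'S_3])%g.
Proof.
move=> cw dim2.
have cardC : (4 <= #|C|)%N.
  rewrite card_vspace card_Fp //.
  by have := leq_pexp2l (isT : (0 < 2)%N) dim2.
have [u [v [uC vC un vn uv]]] :
    exists u v : 'rV['F_2]_n, [/\ u \in C, v \in C, u != 0, v != 0 & u != v].
  have : (1 < #|[set x : 'rV['F_2]_n | x \in C] :\ (0%R : 'rV['F_2]_n)|)%N.
    have := cardsD1 0 [set x : 'rV['F_2]_n | x \in C].
    rewrite !inE rpred0 => E.
    have E2 : #|[set x : 'rV['F_2]_n | x \in C]| = #|C| by apply: eq_card => x; rewrite inE.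
    rewrite E2 in E; move: cardC; rewrite E add1n ltnS; exact: ltnW.
  case/card_gt1P => x [y []]; rewrite !inE => /andP [xn xC] /andP [yn yC] xy.
  by exists x, y.
have [p up] := nz_coord un.
have [v' [v'C v'p v'n]] : exists v', [/\ v' \in C, v' 0 p = 0 & v' != 0].
  case: (F2cases (v 0 p)) => vp; first by exists v.
  exists (u + v); split; first exact: rpredD.
    by rewrite mxE up vp; apply/eqP.
  apply: contra uv; rewrite addr_eq0 oppF2; by [].
have [q v'q] := nz_coord v'n.
have [c1 [c1C c1p c1q]] : exists c1, [/\ c1 \in C, c1 0 p = 1 & c1 0 q = 0].
  case: (F2cases (u 0 q)) => uq; first by exists u.
  exists (u + v'); split; first exact: rpredD.
    by rewrite mxE up v'p; apply/eqP.
  by rewrite mxE uq v'q; apply/eqP.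
pose f := Morphism (FmM cw c1C v'C c1p c1q v'p v'q).
have injf : ('injm f)%g.
  apply/subsetP => x /mker /= /F_inj ->; exact: group1.
exists (f @* [set: 'S_3])%G; split.
  apply/subsetP => x /morphimP [s _ _ ->]; exact: F_PAut.
by rewrite isog_sym; apply: sub_isog.
Qed.
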